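(* Let $s\ge1$ and let constants $M,N,m_1,m_2,n_1,n_2$ satisfy $0<N<1$, $M>N+s$, $n_1>1+\sqrt3$, $n_2>1$, $m_1>\sqrt2$ and $$m_2>\max\Big[n_2,\ \Big(\frac{m_1n_1+Mm_1^2n_1+n_1^2}{m_1^2}\Big)^{1/(1-N)},\ \Big(\frac{n_1}{2m_1}(1+\sqrt5)\Big)^{1/(M-N-s)}\Big].$$ Set $m(0)=m_1m_2^M$, $n(0)=n_1n_2^N$. Consider the system $$\dot b=-\tfrac12 b^2-(t+1)^s a^2-a+1,\qquad \dot a=-ba,$$ and let $\Omega=\{(a,b)\in\mathbb R^2:\ a>0,\ b>0,\ b>m(0)a-n(0)\}$. If $(a_0,b_0)\in\Omega$, then $0<b(t)$ and $a(t)\le a_0$ for all $t\ge0$. *)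

(* Defs.v *)
From Stdlib Require Import Reals.
From Coquelicot Require Import Coquelicot.
Open Scope R_scope.

Definition m2_bound (s M N m1 n1 n2 : R) : R :=
  Rmax n2
    (Rmax (Rpower ((m1 * n1 + M * m1 ^ 2 * n1 + n1 ^ 2) / m1 ^ 2) (1 / (1 - N)))
          (Rpower (n1 / (2 * m1) * (1 + sqrt 5)) (1 / (M - N - s)))).

Definition m0 (M m1 m2 : R) : R := m1 * Rpower m2 M.
Definition n0 (N n1 n2 : R) : R := n1 * Rpower n2 N.

Definition Omega (M N m1 m2 n1 n2 : R) (a b : R) : Prop :=
  0 < a /\ 0 < b /\ b > m0 M m1 m2 * a - n0 N n1 n2.

(* Main.v *)
Require Import Defs.
From Stdlib Require Import Reals Lra Psatz Classical.
From Coquelicot Require Import Coquelicot.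
Open Scope R_scope.

Lemma D_mult f g x df dg: is_derive f x df -> is_derive g x dg ->
  is_derive (fun t => f t * g t) x (df * g x + f x * dg).
Proof. intros H1 H2. apply (is_derive_mult f g x df dg H1 H2). intros; apply Rmult_comm. Qed.

Lemma D_plus f g x df dg: is_derive f x df -> is_derive g x dg ->
  is_derive (fun t => f t + g t) x (df + dg).
Proof. intros H1 H2. apply (is_derive_plus f g x df dg H1 H2). Qed.

Lemma D_minus f g x df dg: is_derive f x df -> is_derive g x dg ->
  is_derive (fun t => f t - g t) x (df - dg).
Proof. intros H1 H2. apply (is_derive_minus f g x df dg H1 H2). Qed.

Lemma D_opp f x df: is_derive f x df -> is_derive (fun t => - f t) x (- df).
Proof. intros H1. apply (is_derive_opp f x df H1). Qed.

Lemma D_const (c x : R) : is_derive (fun _ => c) x 0.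
Proof. apply (is_derive_const c x). Qed.

Lemma D_ext (f g : R -> R) (x l l' : R) : (forall t, f t = g t) -> l = l' -> is_derive f x l -> is_derive g x l'.
Proof. intros H1 H2 H3. subst l'. apply (is_derive_ext f g x l H1 H3). Qed.

Lemma D_exp_lin (C x : R) : is_derive (fun t => exp (C * t)) x (C * exp (C * x)).
Proof. auto_derive. auto. ring. Qed.

Lemma D_rpow (K M x : R) : 0 < K + x ->
  is_derive (fun t => Rpower (K + t) M) x (M * Rpower (K + x) (M - 1)).
Proof. intros Hp. apply is_derive_Reals.
  assert (H := derivable_pt_lim_comp (fun t => K + t) (fun y => Rpower y M) x 1 (M * Rpower (K + x) (M - 1))).
  rewrite <- (Rmult_1_r (M * _)). apply H.
  - replace 1 with (0 + 1) by ring. apply derivable_pt_lim_plus. apply derivable_pt_lim_const. apply derivable_pt_lim_id.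
  - apply derivable_pt_lim_power. exact Hp.
Qed.

Lemma left_dec f T l : is_derive f T l -> 0 < l ->
  exists d, 0 < d /\ forall t, T - d < t < T -> f t < f T.
Proof. intros H Hl. apply is_derive_Reals in H.
  destruct (H (l/2) ltac:(lra)) as [d Hd].
  exists d. split. apply cond_pos. intros t Ht.
  assert (Hh : t - T <> 0) by lra.
  assert (Ha : Rabs (t - T) < d) by (rewrite Rabs_left; lra).
  specialize (Hd _ Hh Ha). replace (T + (t - T)) with t in Hd by ring.
  apply Rabs_def2 in Hd. destruct Hd as [Hd1 Hd2].
  assert (Hq : (f t - f T) / (t - T) > 0) by lra.
  assert (Hneg : t - T < 0) by lra.
  assert (f t - f T = (f t - f T) / (t - T) * (t - T)) by (field; lra).
  nra.
Qed.

Lemma real_ind (P : R -> Prop) :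
  P 0 ->
  (forall T, 0 < T -> (forall u, 0 <= u < T -> P u) -> P T) ->
  (forall T, 0 <= T -> (forall u, 0 <= u <= T -> P u) ->
      exists d, 0 < d /\ forall u, T <= u < T + d -> P u) ->
  forall t, 0 <= t -> P t.
Proof.
  intros H0 H2 H3 t Ht. apply NNPP. intros Hn.
  set (E := fun x => 0 <= x <= t /\ forall u, 0 <= u <= x -> P u).
  assert (Hb : bound E) by (exists t; intros x [Hx _]; lra).
  assert (He : exists x, E x).
  { exists 0. split. lra. intros u Hu. replace u with 0 by lra. exact H0. }
  destruct (completeness E Hb He) as [T [HT1 HT2]].
  assert (HT0 : 0 <= T) by (apply HT1; destruct He; unfold E; split; [lra|]; intros u Hu; replace u with 0 by lra; exact H0).
  assert (HTt : T <= t) by (apply HT2; intros x [Hx _]; lra).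
  assert (Hlt : forall u, 0 <= u < T -> P u).
  { intros u Hu. apply NNPP. intros Hpu.
    assert (T <= u); [|lra]. apply HT2. intros x [Hx Hx2].
    destruct (Rle_lt_dec x u) as [h|h]; [exact h|].
    exfalso. apply Hpu. apply Hx2. lra. }
  assert (HPT : P T).
  { destruct (Req_dec T 0) as [h|h]. rewrite h; exact H0. apply H2. lra. exact Hlt. }
  assert (Hle : forall u, 0 <= u <= T -> P u).
  { intros u Hu. destruct (Req_dec u T) as [h|h]. subst; exact HPT. apply Hlt. lra. }
  destruct (H3 T HT0 Hle) as [d [Hd HPd]].
  destruct (Req_dec T t) as [h|h]. subst. apply Hn; exact HPT.
  assert (HE : E (Rmin (T + d/2) t)).
  { split. split. apply Rmin_glb; lra. apply Rmin_r.
    intros u Hu. destruct (Rle_lt_dec u T) as [h1|h1]. apply Hle; lra.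
    apply HPd. split. lra. assert (Rmin (T + d/2) t <= T + d/2) by apply Rmin_l. lra. }
  assert (Rmin (T + d / 2) t <= T) by (apply HT1; exact HE).
  unfold Rmin in H. destruct (Rle_dec (T + d/2) t); lra.
Qed.

Lemma phi_prop r5 : 0 < r5 -> r5 * r5 = 5 ->
  let phi := 2 / (1 + r5) in phi * (1 + phi) = 1 /\ 2 * phi = r5 - 1 /\ 0 < phi.
Proof. intros H5 H55 phi. unfold phi.
  assert (1 + r5 <> 0) by lra.
  split; [|split].
  - assert (E : (1+r5)*(1+r5) = 2*(3+r5)) by nra.
    replace (2 / (1 + r5) * (1 + 2 / (1 + r5))) with (2*(3+r5)/((1+r5)*(1+r5))) by (field; lra).
    rewrite E. field. lra.
  - apply (Rmult_eq_reg_r (1 + r5)); [|lra]. field_simplify; [|lra]. nra.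
  - apply Rdiv_lt_0_compat; lra.
Qed.

Lemma alg_b0 (a S m1 Em En Es e2 n1 nn d r5 : R) :
  0 <= a -> 0 < m1 -> 0 < Em -> 0 < n1 -> 1 <= Es -> 0 <= S <= Es ->
  nn <= n1 * En -> m1 * Em * a <= nn -> Es * En = Em * e2 -> 0 < e2 ->
  e2 * d < 1 -> d = n1 / (2 * m1) * (1 + r5) -> 0 < r5 -> r5 * r5 = 5 ->
  0 < En ->
  1 - S * a ^ 2 - a > 0.
Proof.
  intros Ha Hm1 HEm Hn1 HEs HS Hnn Hma HE He2 Hd Hdd H5 H55 HEn.
  destruct (phi_prop r5 H5 H55) as [Hp1 [Hp2 Hp3]].
  set (phi := 2 / (1 + r5)) in *.
  set (y := n1 / m1 * e2).
  assert (Hmm : 0 < m1 * Em) by nra.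
  assert (Hy1 : y * (m1 * Em) = n1 * Em * e2) by (unfold y; field; lra).
  assert (Ha1 : a <= y).
  { apply (Rmult_le_reg_r (m1 * Em)); [lra|]. rewrite Hy1.
    assert (0 < n1 * En) by (apply Rmult_lt_0_compat; lra).
    assert (n1 * En <= n1 * En * Es) by nra.
    replace (n1 * Em * e2) with (n1 * (Es * En)) by (rewrite HE; ring). nra. }
  assert (Ha2 : S * a <= y).
  { apply (Rmult_le_reg_r (m1 * Em)); [lra|]. rewrite Hy1.
    assert (0 <= m1*Em*a) by (apply Rmult_le_pos; lra).
    assert (S * (m1*Em*a) <= Es * (m1*Em*a)) by (apply Rmult_le_compat_r; lra).
    assert (Es * (m1*Em*a) <= Es * nn) by (apply Rmult_le_compat_l; lra).
    assert (Es * nn <= Es * (n1 * En)) by (apply Rmult_le_compat_l; lra).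
    replace (n1 * Em * e2) with (n1 * (Es * En)) by (rewrite HE; ring). nra. }
  assert (Hyp : y < phi).
  { assert (Hd0 : 0 < d) by (rewrite Hdd; apply Rmult_lt_0_compat; [apply Rdiv_lt_0_compat|]; lra).
    assert (Hq : n1 / m1 / d = phi) by (unfold phi; rewrite Hdd; field; lra).
    rewrite <- Hq. unfold y. apply (Rmult_lt_reg_r d); [lra|].
    replace (n1 / m1 / d * d) with (n1 / m1) by (field; lra).
    replace (n1 / m1 * e2 * d) with (n1/m1 * (e2 * d)) by ring.
    assert (0 < n1/m1) by (apply Rdiv_lt_0_compat; lra). nra. }
  assert (Hy0 : 0 <= y) by lra.
  assert (a * (1 + S * a) <= y * (1 + y)) by nra.
  assert (y * (1 + y) < phi * (1 + phi)) by nra.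
  nra.
Qed.

Lemma alg_G0 (a bb S m1 Em En Es Ei e1 e2 n1 nn M c d r2 r3 r5 mp : R) :
  0 <= a -> 0 <= bb -> bb = m1 * Em * a - nn -> 0 < m1 -> 1 <= Em -> 0 < n1 ->
  n1 <= nn -> nn <= n1 * En -> 0 <= S <= Es -> 1 <= Es -> 0 < En ->
  Es * En = Em * e2 -> 0 < e2 -> e2 * d < 1 -> d = n1 / (2 * m1) * (1 + r5) ->
  Es * En * En <= Em * Em * e1 -> En <= Em * e1 -> En * Ei = e1 -> 0 < Ei -> Ei <= e1 ->
  0 < e1 -> e1 * c < 1 -> c = (m1 * n1 + M * m1 ^ 2 * n1 + n1 ^ 2) / m1 ^ 2 -> 0 < M ->
  mp = m1 * (M * (Em * Ei)) ->
  0 < r2 -> r2 * r2 = 2 -> 0 < r3 -> r3 * r3 = 3 -> 0 < r5 -> r5 * r5 = 5 ->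
  m1 > r2 -> n1 > 1 + r3 ->
  - / 2 * bb ^ 2 - S * a ^ 2 - a + 1 - mp * a + m1 * Em * bb * a > 0.
Proof.
  intros Ha Hb Hbb Hm1 HEm Hn1 Hnn1 Hnn2 HS HEs HEn HE He2 Hd Hdd HE2 HE3 HE4 HEi HEi2 He1 Hc Hcc HM Hmp
    H2 H22 H3 H33 H5 H55 Hm1r Hn1r.
  destruct (phi_prop r5 H5 H55) as [Hp1 [Hp2 Hp3]].
  set (phi := 2 / (1 + r5)) in *.
  set (mm := m1 * Em) in *.
  assert (Hmm : 0 < mm) by (unfold mm; nra).
  assert (Hmm1 : m1 <= mm) by (unfold mm; nra).
  set (u := nn / mm).
  assert (Hu : mm * u = nn) by (unfold u; field; lra).
  assert (Hu0 : 0 < u) by (unfold u; apply Rdiv_lt_0_compat; lra).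
  assert (T1 : S * u ^ 2 <= n1 ^ 2 / m1 ^ 2 * e1).
  { apply (Rmult_le_reg_r (mm * mm)); [nra|].
    replace (S * u ^ 2 * (mm * mm)) with (S * (nn * nn)) by (rewrite <- Hu; ring).
    replace (n1 ^ 2 / m1 ^ 2 * e1 * (mm * mm)) with (n1 ^ 2 * (Em * Em * e1)) by (unfold mm; field; lra).
    assert (S * (nn * nn) <= Es * (nn * nn)) by nra.
    assert (nn * nn <= (n1 * En) * (n1 * En)) by nra.
    assert (Es * (nn * nn) <= Es * ((n1 * En) * (n1 * En))) by nra.
    assert (n1 ^ 2 * (Es * En * En) <= n1 ^ 2 * (Em * Em * e1)) by nra.
    nra. }
  assert (T2 : u <= n1 / m1 * e1).
  { apply (Rmult_le_reg_r mm); [lra|].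
    replace (u * mm) with nn by (rewrite <- Hu; ring).
    replace (n1 / m1 * e1 * mm) with (n1 * (Em * e1)) by (unfold mm; field; lra). nra. }
  assert (T3 : mp * u <= M * n1 * e1).
  { replace (mp * u) with (M * Ei * nn) by (rewrite Hmp; rewrite <- Hu; unfold mm; ring).
    assert (M * Ei * nn <= M * Ei * (n1 * En)) by (apply Rmult_le_compat_l; nra).
    replace (M * n1 * e1) with (M * Ei * (n1 * En)) by (rewrite <- HE4; ring). lra. }
  assert (Hc2 : c = n1 ^ 2 / m1 ^ 2 * 1 + n1 / m1 + M * n1) by (rewrite Hcc; field; lra).
  assert (Qu : 1 - S * u ^ 2 - u - mp * u > 0).
  { assert (S * u ^ 2 + u + mp * u <= e1 * c) by (rewrite Hc2; nra). lra. }
  assert (HMe : M * e1 * n1 < 1).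
  { assert (0 < n1 / m1) by (apply Rdiv_lt_0_compat; lra).
    assert (0 < n1 ^ 2 / m1 ^ 2) by (apply Rdiv_lt_0_compat; nra).
    assert (M * n1 <= c) by (rewrite Hc2; lra). nra. }
  assert (Hmp1 : mp <= mm).
  { rewrite Hmp. replace (m1 * (M * (Em * Ei))) with (mm * (M * Ei)) by (unfold mm; ring).
    assert (M * Ei <= 1). { assert (M * Ei <= M * e1) by nra. nra. } nra. }
  assert (Hmp0 : 0 <= mp) by (rewrite Hmp; apply Rmult_le_pos; [lra|]; apply Rmult_le_pos; [lra|]; nra).
  assert (Hsu : S * u <= n1 / m1 * e2).
  { apply (Rmult_le_reg_r mm); [lra|].
    replace (S * u * mm) with (S * nn) by (rewrite <- Hu; ring).
    replace (n1 / m1 * e2 * mm) with (n1 * (Em * e2)) by (unfold mm; field; lra).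
    rewrite <- HE.
    assert (S * nn <= Es * nn) by nra. assert (Es * nn <= Es * (n1 * En)) by nra. nra. }
  assert (Hyp : n1 / m1 * e2 < phi).
  { assert (Hd0 : 0 < d) by (rewrite Hdd; apply Rmult_lt_0_compat; [apply Rdiv_lt_0_compat|]; lra).
    assert (Hq : n1 / m1 / d = phi) by (unfold phi; rewrite Hdd; field; lra).
    rewrite <- Hq. apply (Rmult_lt_reg_r d); [lra|].
    replace (n1 / m1 / d * d) with (n1 / m1) by (field; lra).
    replace (n1 / m1 * e2 * d) with (n1/m1 * (e2 * d)) by ring.
    assert (0 < n1/m1) by (apply Rdiv_lt_0_compat; lra). nra. }
  assert (H6 : r2 * r3 >= r5).
  { assert (E6 : (r2*r3)*(r2*r3) = 6) by (replace ((r2*r3)*(r2*r3)) with ((r2*r2)*(r3*r3)) by ring; rewrite H22, H33; ring).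
    assert (0 < r2 * r3) by (apply Rmult_lt_0_compat; lra).
    destruct (Rge_or_gt (r2*r3) r5) as [h|h]; [exact h|]. nra. }
  assert (H7 : m1 * (n1 - 1) > r2 * r3) by nra.
  assert (H8 : mm * (n1 - 1) >= m1 * (n1 - 1)) by nra.
  set (A := mm * mm / 2 - S).
  set (B := 1 + mp).
  assert (Cond2 : 2 * A * u >= B).
  { unfold A, B.
    replace ((2 * (mm * mm / 2 - S)) * u) with (mm * nn - 2 * (S * u)) by (rewrite <- Hu; field).
    assert (mm * nn >= mm * n1) by nra. nra. }
  assert (HA : A > 0) by (unfold B in Cond2; nra).
  assert (Hau : a >= u) by nra.
  assert (Hid : - / 2 * bb ^ 2 - S * a ^ 2 - a + 1 - mp * a + mm * bb * a
     = (1 - S * u ^ 2 - u - mp * u) + (a - u) * (A * (a + u) - B)).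
  { rewrite Hbb. rewrite <- Hu. unfold A, B. field. }
  rewrite Hid.
  assert (A * (a + u) - B >= 0) by nra.
  nra.
Qed.

Lemma ball_R (x e y : R) : ball x e y <-> Rabs (y - x) < e.
Proof. reflexivity. Qed.

Lemma ev_gt (F : (R -> Prop) -> Prop) {FF : Filter F} (f : R -> R) l c :
  filterlim f F (locally l) -> c < l -> F (fun t => c < f t).
Proof. intros H Hc. assert (He : 0 < l - c) by lra.
  apply filterlim_locally with (eps := mkposreal _ He) in H.
  eapply filter_imp; [|exact H]. intros t Ht. assert (Ht' : Rabs (f t - l) < l - c) by exact Ht.
  apply Rabs_def2 in Ht'. lra.
Qed.

Lemma ev_lt (F : (R -> Prop) -> Prop) {FF : Filter F} (f : R -> R) l c :
  filterlim f F (locally l) -> l < c -> F (fun t => f t < c).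
Proof. intros H Hc. assert (He : 0 < c - l) by lra.
  apply filterlim_locally with (eps := mkposreal _ He) in H.
  eapply filter_imp; [|exact H]. intros t Ht. assert (Ht' : Rabs (f t - l) < c - l) by exact Ht.
  apply Rabs_def2 in Ht'. lra.
Qed.

Lemma lim_plus (F : (R -> Prop) -> Prop) {FF : Filter F} (f g : R -> R) lf lg :
  filterlim f F (locally lf) -> filterlim g F (locally lg) ->
  filterlim (fun t => f t + g t) F (locally (lf + lg)).
Proof. intros H1 H2. eapply filterlim_comp_2; [exact H1 | exact H2 |].
  apply (filterlim_plus (V := R_NormedModule) lf lg). Qed.

Lemma lim_mult (F : (R -> Prop) -> Prop) {FF : Filter F} (f g : R -> R) lf lg :
  filterlim f F (locally lf) -> filterlim g F (locally lg) ->
  filterlim (fun t => f t * g t) F (locally (lf * lg)).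
Proof. intros H1 H2. eapply filterlim_comp_2; [exact H1 | exact H2 |].
  apply (filterlim_mult (K := R_AbsRing) lf lg). Qed.

Lemma lim_opp (F : (R -> Prop) -> Prop) {FF : Filter F} (f : R -> R) lf :
  filterlim f F (locally lf) -> filterlim (fun t => - f t) F (locally (- lf)).
Proof. intros H1. eapply filterlim_comp; [exact H1 |].
  apply (filterlim_opp (V := R_NormedModule) lf). Qed.

Lemma loc_int (T : R) (P : R -> Prop) : locally T P -> exists d, 0 < d /\ forall y, Rabs (y - T) < d -> P y.
Proof. intros [e He]. exists e. split. apply cond_pos. intros y Hy. apply He. apply ball_R. exact Hy. Qed.

Lemma right_int (P : R -> Prop) : at_right 0 P -> exists d, 0 < d /\ forall y, 0 < y < d -> P y.
Proof. intros [e He]. exists e. split. apply cond_pos. intros y Hy. apply He. apply ball_R.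
  rewrite Rminus_0_r, Rabs_pos_eq; lra. lra. Qed.

Lemma right_le_loc (f : R -> R) l : filterlim f (locally 0) (locally l) -> filterlim f (at_right 0) (locally l).
Proof. intros H. eapply filterlim_filter_le_1; [|exact H]. apply filter_le_within. Qed.

Lemma cont_ge (f : R -> R) T c : 0 < T -> filterlim f (locally T) (locally (f T)) ->
  (forall u, 0 <= u < T -> c < f u) -> c <= f T.
Proof. intros HT Hf Hu. destruct (Rle_or_lt c (f T)) as [h|h]; [exact h|].
  destruct (loc_int _ _ (ev_lt _ f _ _ Hf h)) as [d [Hd Hd2]].
  set (u := T - Rmin d T / 2).
  assert (Hm1 : Rmin d T <= d) by apply Rmin_l. assert (Hm2 : Rmin d T <= T) by apply Rmin_r.
  assert (Hm0 : 0 < Rmin d T) by (apply Rmin_glb_lt; lra).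
  assert (f u < c). { apply Hd2. unfold u. rewrite Rabs_left; lra. }
  assert (c < f u) by (apply Hu; unfold u; lra). lra.
Qed.

Lemma cont_le (f : R -> R) T c : 0 < T -> filterlim f (locally T) (locally (f T)) ->
  (forall u, 0 <= u < T -> f u < c) -> f T <= c.
Proof. intros HT Hf Hu. destruct (Rle_or_lt (f T) c) as [h|h]; [exact h|].
  destruct (loc_int _ _ (ev_gt _ f _ _ Hf h)) as [d [Hd Hd2]].
  set (u := T - Rmin d T / 2).
  assert (Hm1 : Rmin d T <= d) by apply Rmin_l. assert (Hm2 : Rmin d T <= T) by apply Rmin_r.
  assert (Hm0 : 0 < Rmin d T) by (apply Rmin_glb_lt; lra).
  assert (c < f u). { apply Hd2. unfold u. rewrite Rabs_left; lra. }
  assert (f u < c) by (apply Hu; unfold u; lra). lra.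
Qed.

Lemma Rpow_pos x y : 0 < Rpower x y.
Proof. unfold Rpower. apply exp_pos. Qed.

Lemma Rpow_base_neg K P x : 0 < K <= P -> x <= 0 -> Rpower P x <= Rpower K x.
Proof. intros HK Hx.
  replace x with (- - x) by ring. rewrite (Rpower_Ropp P (-x)), (Rpower_Ropp K (-x)).
  apply Rinv_le_contravar. apply Rpow_pos. apply Rle_Rpower_l; lra.
Qed.

Lemma Rpow_ge1 P x : 1 <= P -> 0 <= x -> 1 <= Rpower P x.
Proof. intros HP Hx. assert (0 < P) by lra. rewrite <- (Rpower_O P) by lra. apply Rle_Rpower; lra. Qed.

Lemma Rpow_inv_lt K x c : 1 < K -> c < Rpower K x -> 0 < c -> Rpower K (- x) * c < 1.
Proof. intros HK Hc Hc0. rewrite Rpower_Ropp.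
  assert (0 < Rpower K x) by apply Rpow_pos.
  apply (Rmult_lt_reg_r (Rpower K x)); [lra|].
  field_simplify; lra.
Qed.

Lemma case_both (s M N m1 m2 n1 n2 T : R) :
  1 <= s -> 0 < N -> N < 1 -> M > N + s -> n1 > 1 + sqrt 3 -> n2 > 1 -> m1 > sqrt 2 ->
  n2 < m2 ->
  (m1 * n1 + M * m1 ^ 2 * n1 + n1 ^ 2) / m1 ^ 2 < Rpower m2 (1 - N) ->
  n1 / (2 * m1) * (1 + sqrt 5) < Rpower m2 (M - N - s) ->
  0 <= T ->
  (forall a, 0 <= a -> m1 * Rpower (m2 + T) M * a <= n1 * Rpower n2 N ->
     1 - Rpower (T + 1) s * a ^ 2 - a > 0) /\
  (forall a bb, 0 <= a -> 0 <= bb -> bb = m1 * Rpower (m2 + T) M * a - n1 * Rpower n2 N ->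
     - / 2 * bb ^ 2 - Rpower (T + 1) s * a ^ 2 - a + 1 - (m1 * (M * Rpower (m2 + T) (M - 1))) * a
       + m1 * Rpower (m2 + T) M * bb * a > 0).
Proof.
  intros Hs HN0 HN1 HM Hn1 Hn2 Hm1 Hm2 Hc Hd HT.
  set (P := m2 + T).
  assert (HP : 1 < P) by (unfold P; lra).
  assert (Hm2P : 0 < m2 <= P) by (unfold P; lra).
  assert (r2p : 0 < sqrt 2) by (apply sqrt_lt_R0; lra).
  assert (r3p : 0 < sqrt 3) by (apply sqrt_lt_R0; lra).
  assert (r5p : 0 < sqrt 5) by (apply sqrt_lt_R0; lra).
  assert (r22 : sqrt 2 * sqrt 2 = 2) by (apply sqrt_sqrt; lra).
  assert (r33 : sqrt 3 * sqrt 3 = 3) by (apply sqrt_sqrt; lra).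
  assert (r55 : sqrt 5 * sqrt 5 = 5) by (apply sqrt_sqrt; lra).
  assert (Hm10 : 0 < m1) by lra.
  assert (Hn10 : 0 < n1) by lra.
  assert (HEm : 1 <= Rpower P M) by (apply Rpow_ge1; lra).
  assert (HEs : 1 <= Rpower P s) by (apply Rpow_ge1; lra).
  assert (HEn : 0 < Rpower P N) by apply Rpow_pos.
  assert (HS : 0 <= Rpower (T + 1) s <= Rpower P s).
  { split. left; apply Rpow_pos. apply Rle_Rpower_l; unfold P; lra. }
  assert (Hnn1 : n1 <= n1 * Rpower n2 N).
  { assert (1 <= Rpower n2 N) by (apply Rpow_ge1; lra). nra. }
  assert (Hnn2 : n1 * Rpower n2 N <= n1 * Rpower P N).
  { apply Rmult_le_compat_l; [lra|]. apply Rle_Rpower_l; unfold P; lra. }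
  assert (HE : Rpower P s * Rpower P N = Rpower P M * Rpower P (s + N - M)).
  { rewrite <- !Rpower_plus. f_equal; try ring. }
  assert (He2 : 0 < Rpower P (s + N - M)) by apply Rpow_pos.
  assert (He2d : Rpower P (s + N - M) * (n1 / (2 * m1) * (1 + sqrt 5)) < 1).
  { assert (H1 : Rpower P (s + N - M) <= Rpower m2 (s + N - M)) by (apply Rpow_base_neg; lra).
    assert (H2 : Rpower m2 (- (M - N - s)) * (n1 / (2 * m1) * (1 + sqrt 5)) < 1).
    { apply Rpow_inv_lt; [lra|exact Hd|]. apply Rmult_lt_0_compat; [apply Rdiv_lt_0_compat|]; lra. }
    replace (- (M - N - s)) with (s + N - M) in H2 by ring.
    assert (0 < n1 / (2 * m1) * (1 + sqrt 5)) by (apply Rmult_lt_0_compat; [apply Rdiv_lt_0_compat|]; lra).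
    nra. }
  assert (HE2 : Rpower P s * Rpower P N * Rpower P N <= Rpower P M * Rpower P M * Rpower P (N - 1)).
  { rewrite <- !Rpower_plus. apply Rle_Rpower; lra. }
  assert (HE3 : Rpower P N <= Rpower P M * Rpower P (N - 1)).
  { rewrite <- !Rpower_plus. apply Rle_Rpower; lra. }
  assert (HE4 : Rpower P N * Rpower P (-1) = Rpower P (N - 1)).
  { rewrite <- !Rpower_plus. f_equal; try ring. }
  assert (HEi : 0 < Rpower P (-1)) by apply Rpow_pos.
  assert (HEi2 : Rpower P (-1) <= Rpower P (N - 1)) by (apply Rle_Rpower; lra).
  assert (He1 : 0 < Rpower P (N - 1)) by apply Rpow_pos.
  set (c := (m1 * n1 + M * m1 ^ 2 * n1 + n1 ^ 2) / m1 ^ 2) in *.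
  assert (Hc0 : 0 < c).
  { unfold c. apply Rdiv_lt_0_compat; [|nra].
    assert (0 < M * m1 ^ 2 * n1) by (apply Rmult_lt_0_compat; [apply Rmult_lt_0_compat|]; nra). nra. }
  assert (He1c : Rpower P (N - 1) * c < 1).
  { assert (H1 : Rpower P (N - 1) <= Rpower m2 (N - 1)) by (apply Rpow_base_neg; lra).
    assert (H2 : Rpower m2 (- (1 - N)) * c < 1) by (apply Rpow_inv_lt; lra).
    replace (- (1 - N)) with (N - 1) in H2 by ring. nra. }
  assert (Hmp : m1 * (M * Rpower P (M - 1)) = m1 * (M * (Rpower P M * Rpower P (-1)))).
  { rewrite <- Rpower_plus. replace (M + -1) with (M - 1) by ring. reflexivity. }
  split.
  - intros a Ha Hma.
    eapply (alg_b0 a _ m1 (Rpower P M) (Rpower P N) (Rpower P s) (Rpower P (s + N - M)) n1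
      (n1 * Rpower n2 N) _ (sqrt 5)); try eassumption; try lra; try reflexivity.
  - intros a bb Ha Hb Hbb.
    eapply (alg_G0 a bb _ m1 (Rpower P M) (Rpower P N) (Rpower P s) (Rpower P (-1)) (Rpower P (N - 1))
      (Rpower P (s + N - M)) n1 (n1 * Rpower n2 N) M c _ (sqrt 2) (sqrt 3) (sqrt 5)); 
      try eassumption; try lra; try reflexivity.
Qed.

Lemma cont_of_der (f : R -> R) t df : is_derive f t df -> filterlim f (locally t) (locally (f t)).
Proof. intros H. apply (ex_derive_continuous (K := R_AbsRing) (V := R_NormedModule)). exists df; exact H. Qed.

Lemma left_contra f T l : 0 < T -> is_derive f T l -> 0 < l ->
  (forall u, 0 <= u < T -> f T < f u) -> False.
Proof. intros HT Hd Hl Hu. destruct (left_dec f T l Hd Hl) as [d [Hd0 Hd1]].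
  set (u := T - Rmin d T / 2).
  assert (Hm1 : Rmin d T <= d) by apply Rmin_l. assert (Hm2 : Rmin d T <= T) by apply Rmin_r.
  assert (Hm0 : 0 < Rmin d T) by (apply Rmin_glb_lt; lra).
  assert (f u < f T) by (apply Hd1; unfold u; lra).
  assert (f T < f u) by (apply Hu; unfold u; lra). lra.
Qed.

Theorem lemma4p3 (s M N m1 m2 n1 n2 : R) (a b : R -> R) :
  1 <= s ->
  0 < N -> N < 1 ->
  M > N + s ->
  n1 > 1 + sqrt 3 ->
  n2 > 1 ->
  m1 > sqrt 2 ->
  m2 > m2_bound s M N m1 n1 n2 ->
  filterlim a (at_right 0) (locally (a 0)) ->
  filterlim b (at_right 0) (locally (b 0)) ->
  (forall t, 0 < t ->
     is_derive b t (- / 2 * (b t) ^ 2 - Rpower (t + 1) s * (a t) ^ 2 - a t + 1)) ->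
  (forall t, 0 < t -> is_derive a t (- (b t) * a t)) ->
  Omega M N m1 m2 n1 n2 (a 0) (b 0) ->
  forall t, 0 <= t -> 0 < b t /\ a t <= a 0.
Proof.
  intros Hs HN0 HN1 HM Hn1 Hn2 Hm1 Hm2 Ha0 Hb0 Hdb Hda HO.
  unfold Omega, m0, n0 in HO. destruct HO as [HA0 [HB0 HG0]].
  unfold m2_bound in Hm2.
  assert (Hm2a : n2 < m2) by (eapply Rle_lt_trans; [apply Rmax_l|exact Hm2]).
  assert (Hm2b : Rpower ((m1 * n1 + M * m1 ^ 2 * n1 + n1 ^ 2) / m1 ^ 2) (1 / (1 - N)) < m2).
  { eapply Rle_lt_trans; [|exact Hm2]. eapply Rle_trans; [|apply Rmax_r]. apply Rmax_l. }
  assert (Hm2c : Rpower (n1 / (2 * m1) * (1 + sqrt 5)) (1 / (M - N - s)) < m2).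
  { eapply Rle_lt_trans; [|exact Hm2]. eapply Rle_trans; [|apply Rmax_r]. apply Rmax_r. }
  assert (r2p : 0 <= sqrt 2) by apply sqrt_pos.
  assert (r3p : 0 <= sqrt 3) by apply sqrt_pos.
  assert (r5p : 0 <= sqrt 5) by apply sqrt_pos.
  assert (Hm10 : 0 < m1) by lra.
  assert (Hn10 : 0 < n1) by lra.
  assert (Hc : (m1 * n1 + M * m1 ^ 2 * n1 + n1 ^ 2) / m1 ^ 2 < Rpower m2 (1 - N)).
  { set (c := (m1 * n1 + M * m1 ^ 2 * n1 + n1 ^ 2) / m1 ^ 2) in *.
    assert (Hc0 : 0 < c).
    { unfold c. apply Rdiv_lt_0_compat; [|nra].
      assert (0 < M * m1 ^ 2 * n1) by (apply Rmult_lt_0_compat; [apply Rmult_lt_0_compat|]; nra). nra. }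
    assert (H := Rlt_Rpower_l (Rpower c (1 / (1 - N))) m2 (1 - N) ltac:(lra) (conj (Rpow_pos _ _) Hm2b)).
    rewrite Rpower_mult in H. replace (1 / (1 - N) * (1 - N)) with 1 in H by (field; lra).
    rewrite Rpower_1 in H; lra. }
  assert (Hd : n1 / (2 * m1) * (1 + sqrt 5) < Rpower m2 (M - N - s)).
  { set (c := n1 / (2 * m1) * (1 + sqrt 5)) in *.
    assert (Hc0 : 0 < c) by (unfold c; apply Rmult_lt_0_compat; [apply Rdiv_lt_0_compat|]; lra).
    assert (H := Rlt_Rpower_l (Rpower c (1 / (M - N - s))) m2 (M - N - s) ltac:(lra) (conj (Rpow_pos _ _) Hm2c)).
    rewrite Rpower_mult in H. replace (1 / (M - N - s) * (M - N - s)) with 1 in H by (field; lra).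
    rewrite Rpower_1 in H; lra. }
  pose proof (fun T HT => case_both s M N m1 m2 n1 n2 T Hs HN0 HN1 HM Hn1 Hn2 Hm1 Hm2a Hc Hd HT) as Hcase.
  clear Hm2 Hm2b Hm2c Hc Hd.
  set (n := n1 * Rpower n2 N) in *.
  set (mf := fun t => m1 * Rpower (m2 + t) M).
  set (G := fun t => b t - mf t * a t + n).
  set (C := Rmax (b 0) 2 + 1).
  assert (HC : b 0 < C /\ 3 <= C) by (unfold C; split; [assert (H := Rmax_l (b 0) 2)|assert (H := Rmax_r (b 0) 2)]; lra).
  assert (HG0' : 0 < G 0).
  { unfold G, mf. rewrite Rplus_0_r. lra. }
  assert (Hdmf : forall t, 0 <= t -> is_derive mf t (m1 * (M * Rpower (m2 + t) (M - 1)))).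
  { intros t Ht. unfold mf. apply is_derive_scal. apply D_rpow. lra. }
  assert (HdG : forall t, 0 < t -> is_derive G t
     ((- / 2 * (b t) ^ 2 - Rpower (t + 1) s * (a t) ^ 2 - a t + 1)
       - (m1 * (M * Rpower (m2 + t) (M - 1)) * a t + mf t * (- (b t) * a t)) + 0)).
  { intros t Ht. unfold G. apply D_plus; [apply D_minus|apply D_const].
    apply Hdb; exact Ht. apply D_mult. apply Hdmf; lra. apply Hda; exact Ht. }
  assert (HGr : filterlim G (at_right 0) (locally (G 0))).
  { unfold G. apply (lim_plus _ (fun t => b t - mf t * a t) (fun _ => n)).
    2: apply filterlim_const.
    apply (lim_plus _ b (fun t => - (mf t * a t))); [exact Hb0|]. apply (lim_opp _ (fun t => mf t * a t)). apply (lim_mult _ mf a).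
    all: first [exact Ha0 | apply right_le_loc; apply (cont_of_der mf 0 _ (Hdmf 0 (Rle_refl 0)))]. }

  set (Pd := fun t => 0 < a t /\ 0 < b t /\ 0 < G t /\ b t < C).
  assert (Hall : forall t, 0 <= t -> Pd t).
  { apply real_ind.
    - unfold Pd. repeat split; lra.
    - intros T HT Hlt.
      assert (HaT : 0 <= a T).
      { apply (cont_ge a T 0 HT (cont_of_der a T _ (Hda T HT))). intros u Hu. apply (Hlt u Hu). }
      assert (HbT : 0 <= b T).
      { apply (cont_ge b T 0 HT (cont_of_der b T _ (Hdb T HT))). intros u Hu. apply (Hlt u Hu). }
      assert (HGT : 0 <= G T).
      { apply (cont_ge G T 0 HT (cont_of_der G T _ (HdG T HT))). intros u Hu. apply (Hlt u Hu). }
      assert (HbC : b T <= C).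
      { apply (cont_le b T C HT (cont_of_der b T _ (Hdb T HT))). intros u Hu. apply (Hlt u Hu). }
      destruct (Hcase T (Rlt_le _ _ HT)) as [Hc1 Hc2].
      assert (HST : 0 < Rpower (T + 1) s) by apply Rpow_pos.
      assert (HaT' : 0 < a T).
      { destruct HaT as [Hq|Hq]; [exact Hq|]. exfalso.
        set (h := fun t => a t * exp (C * t)).
        assert (Hder : forall x, T/2 <= x -> x <= T ->
           derivable_pt_lim h x ((- b x * a x) * exp (C*x) + a x * (C * exp (C*x)))).
        { intros x H1 H2. apply is_derive_Reals. apply (D_mult a (fun t => exp (C * t))). apply Hda; lra. apply D_exp_lin. }
        destruct (MVT_cor3 h _ (T/2) T ltac:(lra) Hder) as [c0 [Hc01 [Hc02 Hc03]]].
        assert (Hac : 0 <= a c0 /\ b c0 <= C).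
        { destruct (Req_dec c0 T) as [e|e]. rewrite e; lra.
          destruct (Hlt c0 ltac:(lra)) as [q1 [q2 [q3 q4]]]. lra. }
        assert (Hpos : 0 <= (- b c0 * a c0) * exp (C*c0) + a c0 * (C * exp (C*c0))).
        { assert (0 < exp (C*c0)) by apply exp_pos.
          replace ((- b c0 * a c0) * exp (C*c0) + a c0 * (C * exp (C*c0))) with
            (a c0 * exp (C * c0) * (C - b c0)) by ring.
          apply Rmult_le_pos; [apply Rmult_le_pos|]; lra. }
        unfold h in Hc03. rewrite <- Hq in Hc03.
        assert (0 < a (T/2)) by (apply Hlt; lra). assert (0 < exp (C*(T/2))) by apply exp_pos.
        assert (0 < a (T/2) * exp (C*(T/2))) by (apply Rmult_lt_0_compat; lra).
        assert (0 <= ((- b c0 * a c0) * exp (C*c0) + a c0 * (C * exp (C*c0))) * (T - T/2)) by (apply Rmult_le_pos; lra).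
        lra. }
      assert (HbT' : 0 < b T).
      { destruct HbT as [Hq|Hq]; [exact Hq|]. exfalso.
        apply (left_contra b T _ HT (Hdb T HT)).
        - assert (Hm : m1 * Rpower (m2 + T) M * a T <= n) by (unfold G, mf in HGT; lra).
          assert (Hv := Hc1 (a T) (Rlt_le _ _ HaT') Hm).
          rewrite <- Hq. replace (- / 2 * 0 ^ 2) with 0 by ring. lra.
        - intros u Hu. rewrite <- Hq. apply (Hlt u Hu). }
      assert (HGT' : 0 < G T).
      { destruct HGT as [Hq|Hq]; [exact Hq|]. exfalso.
        apply (left_contra G T _ HT (HdG T HT)).
        - assert (Hbb : b T = m1 * Rpower (m2 + T) M * a T - n) by (unfold G, mf in Hq; lra).
          assert (Hv := Hc2 (a T) (b T) (Rlt_le _ _ HaT') (Rlt_le _ _ HbT') Hbb).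
          unfold mf. lra.
        - intros u Hu. rewrite <- Hq. apply (Hlt u Hu). }
      assert (HbC' : b T < C).
      { destruct HbC as [Hq|Hq]; [exact Hq|]. exfalso.
        apply (left_contra (fun t => - b t) T _ HT (D_opp _ _ _ (Hdb T HT))).
        - rewrite Hq. assert (0 <= Rpower (T + 1) s * a T ^ 2) by (apply Rmult_le_pos; [lra|]; apply pow2_ge_0).
          destruct HC as [_ HC3]. nra.
        - intros u Hu. rewrite Hq. destruct (Hlt u Hu) as [q1 [q2 [q3 q4]]]. lra. }
      unfold Pd. repeat split; assumption.
    - intros T HT Hle.
      assert (HPT := Hle T (conj HT (Rle_refl T))). unfold Pd in HPT.
      destruct HPT as [p1 [p2 [p3 p4]]].
      destruct (Req_dec T 0) as [e|e].
      + subst T.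
        assert (Hev : at_right 0 Pd).
        { unfold Pd. apply filter_and; [apply (ev_gt _ _ _ _ Ha0); lra|].
          apply filter_and; [apply (ev_gt _ _ _ _ Hb0); lra|].
          apply filter_and; [apply (ev_gt _ _ _ _ HGr); lra|].
          apply (ev_lt _ _ _ _ Hb0); lra. }
        destruct (right_int _ Hev) as [d [Hd Hd2]]. exists d. split; [exact Hd|].
        intros u Hu. destruct (Req_dec u 0) as [e|e]. subst u. apply Hle; lra. apply Hd2; lra.
      + assert (HT' : 0 < T) by lra.
        assert (Hev : locally T Pd).
        { unfold Pd. apply filter_and; [apply (ev_gt _ _ _ _ (cont_of_der a T _ (Hda T HT'))); lra|].
          apply filter_and; [apply (ev_gt _ _ _ _ (cont_of_der b T _ (Hdb T HT'))); lra|].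
          apply filter_and; [apply (ev_gt _ _ _ _ (cont_of_der G T _ (HdG T HT'))); lra|].
          apply (ev_lt _ _ _ _ (cont_of_der b T _ (Hdb T HT'))); lra. }
        destruct (loc_int _ _ Hev) as [d [Hd Hd2]]. exists d. split; [exact Hd|].
        intros u Hu. apply Hd2. rewrite Rabs_pos_eq; lra. }
  intros t Ht. destruct (Hall t Ht) as [Hat [Hbt _]]. split; [exact Hbt|].
  destruct (Req_dec t 0) as [e|e]. subst t; lra.
  destruct (Rle_or_lt (a t) (a 0)) as [Hq|Hq]; [exact Hq|exfalso].
  destruct (right_int _ (ev_lt _ a _ _ Ha0 Hq)) as [d [Hd Hd2]].
  set (u := Rmin d t / 2).
  assert (Hm1' : Rmin d t <= d) by apply Rmin_l. assert (Hm2' : Rmin d t <= t) by apply Rmin_r.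
  assert (Hm0 : 0 < Rmin d t) by (apply Rmin_glb_lt; lra).
  assert (Hau : a u < a t) by (apply Hd2; unfold u; lra).
  assert (Hder : forall x, u <= x -> x <= t -> derivable_pt_lim a x (- b x * a x)).
  { intros x H1 H2. apply is_derive_Reals. apply Hda. unfold u in H1; lra. }
  destruct (MVT_cor3 a _ u t ltac:(unfold u; lra) Hder) as [c0 [Hc01 [Hc02 Hc03]]].
  destruct (Hall c0 ltac:(unfold u in Hc01; lra)) as [q1 [q2 _]].
  assert (0 < b c0 * a c0) by (apply Rmult_lt_0_compat; lra).
  assert (0 <= b c0 * a c0 * (t - u)) by (apply Rmult_le_pos; unfold u in *; lra).
  assert (a t = a u - b c0 * a c0 * (t - u)) by (rewrite Hc03; ring).
  lra.
Qed.
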